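(* Assume no dense set exists, let $\mathcal O\subseteq V$ with $|\mathcal O|\le k$ and $f(\mathcal O)=\mathrm{OPT}$, and let $S'\subseteq V$ satisfy $f(S')\le\alpha\,\mathrm{OPT}$ with $\alpha=3\cdot10^{-3}$. Let $\epsilon=10^{-8}$ and $G=\{o\in\mathcal O: f(o\mid S')\ge\frac{1+\epsilon}{2}\cdot\frac{\mathrm{OPT}}{k}\}$. Then $|G|\ge\eta k$.
   Context: $V$ is a finite ground set; $f:2^V\to\mathbb{R}_{\ge0}$ is monotone, submodular and normalized; $f(e\mid Y)=f(Y\cup\{e\})-f(Y)$. $k$ is a positive integer, $\mathrm{OPT}=\max\{f(S):S\subseteq V,|S|\le k\}$. A set $D$ is dense if $|D|\le\eta k$ and $f(D)\ge\frac{1-\gamma}{2}\mathrm{OPT}$, where $\gamma=10^{-2}$, $\eta=5\cdot10^{-5}$. *)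

(* Defs.v *)
From HB Require Import structures.
From mathcomp Require Import all_boot all_order all_algebra.
Set Implicit Arguments. Unset Strict Implicit. Unset Printing Implicit Defensive.
Import Order.TTheory GRing.Theory Num.Theory.
Local Open Scope ring_scope.

Section Sub.
Variables (R : realFieldType) (V : finType).
Implicit Types (f : {set V} -> R) (A B : {set V}).

Definition marg f (e : V) (Y : {set V}) : R := f (e |: Y) - f Y.

Definition monotone_set f := forall A B, A \subset B -> f A <= f B.
Definition submodular f := forall A B, f (A :|: B) + f (A :&: B) <= f A + f B.
Definition normalized f := f set0 = 0.
Definition nonneg_fun f := forall A, 0 <= f A.

(* OPT = max { f S : |S| <= k } (f nonnegative, so 0 is a harmless seed) *)
Definition OPT f (k : nat) : R :=
  \big[Num.max/0]_(S : {set V} | (#|S| <= k)%N) f S.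
End Sub.

Definition gamma_c {R : realFieldType} : R := 1 / (10%:R ^+ 2).
Definition eta_c {R : realFieldType} : R := 5%:R / (10%:R ^+ 5).
Definition alpha_c {R : realFieldType} : R := 3%:R / (10%:R ^+ 3).
Definition eps_c {R : realFieldType} : R := 1 / (10%:R ^+ 8).

Definition dense {R : realFieldType} {V : finType} (f : {set V} -> R) (k : nat)
  (D : {set V}) : Prop :=
  (#|D|%:R <= (eta_c : R) * k%:R) /\ ((1 - (gamma_c : R)) / 2%:R * OPT f k <= f D).

(* Main.v *)
Require Import Defs.
From HB Require Import structures.
From mathcomp Require Import all_boot all_order all_algebra.
From mathcomp Require Import lra ring.
Import Order.TTheory GRing.Theory Num.Theory.
Local Open Scope ring_scope.

Lemma dimret (R : realFieldType) (V : finType) (f : {set V} -> R)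
  (f_mono : monotone_set f) (f_sub : submodular f) (x : V) (A C : {set V}) :
  A \subset C -> marg f x C <= marg f x A.
Proof.
move=> AC; rewrite /marg.
have h := f_sub (x |: A) C.
have e : (x |: A) :|: C = x |: C.
  apply/setP=> y; rewrite !inE; case: (y == x) => //=.
  case yA: (y \in A) => //=; by rewrite (subsetP AC).
have s : A \subset (x |: A) :&: C by rewrite subsetI subsetUr AC.
have := f_mono _ _ s; rewrite e in h; lra.
Qed.

Lemma chain (R : realFieldType) (V : finType) (f : {set V} -> R)
  (f_mono : monotone_set f) (f_sub : submodular f) (A : {set V}) :
  forall n (B : {set V}), #|B| = n ->
  f (A :|: B) <= f A + \sum_(o in B) marg f o A.
Proof.
elim=> [|n IH] B cB.
  move/eqP: cB; rewrite cards_eq0 => /eqP ->; rewrite setU0 big_set0 addr0 //.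
have : (0 < #|B|)%N by rewrite cB.
case/card_gt0P=> x xB.
rewrite (big_setD1 _ xB) /=.
have cB' : #|B :\ x| = n by rewrite (cardsD1 x B) xB in cB; case: cB.
have ih := IH _ cB'.
have e : A :|: B = x |: (A :|: B :\ x).
  by rewrite setUCA (setD1K xB).
have d := @dimret _ _ f f_mono f_sub x _ _ (subsetUl A (B :\ x)).
rewrite e; move: d; rewrite {1}/marg => d. lra.
Qed.

Theorem mainTheorem11 (R : realFieldType) (V : finType) (f : {set V} -> R)
  (k : nat) (O S' : {set V})
  (f_nonneg : nonneg_fun f) (f_mono : monotone_set f)
  (f_sub : submodular f) (f_norm : normalized f)
  (k_pos : (0 < k)%N)
  (no_dense : ~ exists D : {set V}, dense f k D)
  (O_card : (#|O| <= k)%N) (O_opt : f O = OPT f k)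
  (S'_small : f S' <= (alpha_c : R) * OPT f k) :
  (eta_c : R) * k%:R <=
    #|[set o in O | (1 + (eps_c : R)) / 2%:R * (OPT f k / k%:R) <= marg f o S']|%:R.
Proof.
set P := OPT f k.
set c := (1 + (eps_c : R)) / 2%:R * (P / k%:R).
set G := [set o in O | c <= marg f o S'].
rewrite leNgt; apply/negP => HG; apply: no_dense; exists G; split.
  exact: ltW.
set B := O :\: G.
have P0 : 0 <= P by rewrite /P -O_opt.
have kR : (0 : R) < k%:R by rewrite ltr0n.
have c0 : 0 <= c.
  rewrite /c; apply: mulr_ge0; last exact: divr_ge0.
  apply: divr_ge0 => //; rewrite /eps_c -!natrX; lra.
have h1 : f O <= f ((G :|: S') :|: B).
  apply: f_mono; apply/subsetP=> y yO; rewrite in_setU in_setD.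
  case: (boolP (y \in G)) => yG; first by rewrite in_setU yG.
  by rewrite yO orbT.
have h2 := @chain _ _ f f_mono f_sub (G :|: S') _ B (erefl #|B|).
have h3 : \sum_(o in B) marg f o (G :|: S') <= \sum_(o in B) c.
  apply: ler_sum => o; rewrite !inE => /andP [oG oO].
  rewrite oO /= -ltNge in oG.
  apply: le_trans (ltW oG); apply: dimret => //; exact: subsetUr.
have h4 : \sum_(o in B) c <= (1 + (eps_c : R)) / 2%:R * P.
  rewrite sumr_const -[c *+ _]mulr_natl.
  have kc : #|B|%:R * c <= k%:R * c.
    apply: ler_wpM2r => //; rewrite ler_nat.
    apply: leq_trans O_card; apply: subset_leq_card; exact: subsetDl.
  have kk : k%:R * (P / k%:R) = P by rewrite mulrC divfK // gt_eqF.
  apply: le_trans kc _; rewrite /c mulrCA kk //.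
have h5 : f (G :|: S') <= f G + f S'.
  have := f_sub G S'; have := f_nonneg (G :&: S'); lra.
rewrite -/P.
have cst : (alpha_c : R) + eps_c / 2%:R <= gamma_c / 2%:R.
  rewrite /alpha_c /eps_c /gamma_c -!natrX; lra.
rewrite O_opt -/P in h1.
have : 0 <= P * (gamma_c / 2%:R - (alpha_c + eps_c / 2%:R)).
  apply: mulr_ge0 => //; lra.
have S'P : f S' <= alpha_c * P by exact: S'_small.
have lin : P <= f G + alpha_c * P + (1 + eps_c) / 2%:R * P by lra.
move=> hp; rewrite -subr_ge0.
have -> : f G - (1 - gamma_c) / 2%:R * P =
  (f G + alpha_c * P + (1 + eps_c) / 2%:R * P - P) +
  P * (gamma_c / 2%:R - (alpha_c + eps_c / 2%:R)) by field.
apply: addr_ge0 => //; lra.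
Qed.
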